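(* For every reachable pointed lasso automaton $X=(X_1,X_2,\overline{x},\delta_1,\delta_2,\delta_3)$, define $T(X)=(\sim_\delta,\sim)$ as in the context. Then $\sim$ is a well-defined equivalence relation on $\Sigma^{\mathrm{up}}$, $(\sim_\delta,\sim)$ is a congruence on the free Wilke algebra $(\Sigma^+,\Sigma^{\mathrm{up}})$, and whenever there is a morphism $X\to Y$ of reachable pointed lasso automata, $T(X)\subseteq T(Y)$ componentwise. (That is, $T$ is a well-defined functor from $\mathrm{Alg}_r(G_1)$ to the preorder of Wilke algebra congruences under inclusion.)
   Context: $\Sigma$ is a finite alphabet, $\Sigma^+$ the nonempty words, $\Sigma^{\ast+}=\Sigma^\ast\times\Sigma^+$ the lassos, $\Sigma^{\mathrm{up}}=\{uv^\omega\mid u\in\Sigma^\ast,v\in\Sigma^+\}$ the ultimately periodic words; $(u,v)\sim_\gamma(u',v')$ iff $uv^\omega=u'v'^\omega$. A pointed lasso automaton is $(X_1,X_2,\overline{x},\delta_1,\delta_2,\delta_3)$ with disjoint $X_1,X_2$, $\overline{x}\in X_1$, $\delta_1:X_1\times\Sigma\to X_1$, $\delta_2:X_1\times\Sigma\to X_2$, $\delta_3:X_2\times\Sigma\to X_2$; extend $\delta_1,\delta_3$ to words, $\delta_\circ(x,av)=\delta_3(\delta_2(x,a),v)$ for $x\in X_1$, $\delta(x,(u,v))=\delta_\circ(\delta_1(x,u),v)$. It is reachable if every $x\in X_1$ is $\delta_1(\overline{x},w)$ for some word and every $y\in X_2$ is $\delta(\overline{x},(u,v))$ for some lasso; morphisms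 are pairs of maps preserving the initial state and commuting with $\delta_1,\delta_2,\delta_3$; $\mathrm{Alg}_r(G_1)$ is the resulting category. A set $c\subseteq X_2$ is admissible if the accepted lasso language $\{(u,v)\mid\delta(\overline{x},(u,v))\in c\}$ is closed under $\sim_\gamma$; $\mathrm{Adm}(X_2)$ is the set of admissible sets. $\sim_\delta\subseteq\Sigma^+\times\Sigma^+$: $u\sim_\delta v$ iff $\delta_1(x,u)=\delta_1(x,v)$ and $\delta_\circ(x,u)=\delta_\circ(x,v)$ for all $x\in X_1$, and $\delta_3(y,u)=\delta_3(y,v)$ for all $y\in X_2$. $\sim$ on $\Sigma^{\mathrm{up}}$: $uv^\omega\sim u'v'^\omega$ iff for all $x\in X_1$ and $c\in\mathrm{Adm}(X_2)$, $\delta(x,(u,v))\in c\iff\delta(x,(u',v'))\in c$. The free Wilke algebra over $\Sigma$ is $(\Sigma^+,\Sigma^{\mathrm{up}})$ with concatenation on $\Sigma^+$, mixed product $u\cdot(vw^\omega)=(uv)w^\omega$ and $\omega$-power $u\mapsto u^\omega$; a congruence on it is a pair of equivalence relations on $\Sigma^+$ and $\Sigma^{\mathrm{up}}$ compatible with these three operations. *)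

(* Defs.v *)
From mathcomp Require Import all_boot.
Set Implicit Arguments. Unset Strict Implicit. Unset Printing Implicit Defensive.

(* Pointed lasso automaton over alphabet S. X1, X2 are separate types,
   hence disjoint. *)
Record lasso_aut (S : finType) : Type := LassoAut {
  st1 : Type; st2 : Type; init : st1;
  d1 : st1 -> S -> st1; d2 : st1 -> S -> st2; d3 : st2 -> S -> st2 }.

Section Defs.
Variable S : finType.
Implicit Types (u v w : seq S).

Definition d1w (X : lasso_aut S) (x : st1 X) u : st1 X := foldl (@d1 S X) x u.
Definition d3w (X : lasso_aut S) (y : st2 X) u : st2 X := foldl (@d3 S X) y u.
Definition dcirc (X : lasso_aut S) (x : st1 X) v : option (st2 X) :=
  match v with [::] => None | a :: v' => Some (d3w (d2 x a) v') end.
Definition dlasso (X : lasso_aut S) (x : st1 X) u v : option (st2 X) :=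
  dcirc (d1w x u) v.

Definition inc (T : Type) (o : option T) (c : T -> Prop) : Prop :=
  match o with Some y => c y | None => False end.

(* the ultimately periodic omega-word u v^omega (values are Some _ when v is
   nonempty) *)
Definition upw u v : nat -> option S :=
  fun n => if n < size u then onth u n else onth v ((n - size u) %% size v).

Definition gamma u v u' v' : Prop := forall n, upw u v n = upw u' v' n.

Definition reachable (X : lasso_aut S) : Prop :=
  (forall x : st1 X, exists w, d1w (init X) w = x) /\
  (forall y : st2 X, exists u v, v != [::] /\ dlasso (init X) u v = Some y).

Definition admissible (X : lasso_aut S) (c : st2 X -> Prop) : Prop :=
  forall u v u' v', v != [::] -> v' != [::] -> gamma u v u' v' ->
    (inc (dlasso (init X) u v) c <-> inc (dlasso (init X) u' v') c).

Definition sim_delta (X : lasso_aut S) u v : Prop :=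
  (forall x : st1 X, d1w x u = d1w x v /\ dcirc x u = dcirc x v) /\
  (forall y : st2 X, d3w y u = d3w y v).

Definition lasso_sim (X : lasso_aut S) u v u' v' : Prop :=
  forall (x : st1 X) (c : st2 X -> Prop), admissible c ->
    (inc (dlasso x u v) c <-> inc (dlasso x u' v') c).

Definition rep (w : nat -> option S) u v : Prop :=
  v != [::] /\ forall n, w n = upw u v n.
Definition is_up (w : nat -> option S) : Prop := exists u v, rep w u v.

Definition sim (X : lasso_aut S) (w w' : nat -> option S) : Prop :=
  forall u v u' v', rep w u v -> rep w' u' v' -> lasso_sim X u v u' v'.

Definition mixprod u (w : nat -> option S) : nat -> option S :=
  fun n => if n < size u then onth u n else w (n - size u).
Definition omega_pow u : nat -> option S := upw [::] u.

Definition is_morphism (X Y : lasso_aut S) (f1 : st1 X -> st1 Y)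
  (f2 : st2 X -> st2 Y) : Prop :=
  [/\ f1 (init X) = init Y,
      forall x a, f1 (d1 x a) = d1 (f1 x) a,
      forall x a, f2 (d2 x a) = d2 (f1 x) a &
      forall y a, f2 (d3 y a) = d3 (f2 y) a].

End Defs.

(* Main.v *)
Require Import Defs.
From mathcomp Require Import all_boot.
Set Implicit Arguments. Unset Strict Implicit.

Section Aux.
Variable S : finType.
Implicit Types (u v w : seq S).

Lemma upw_cat w u v n : upw (w ++ u) v n =
  if n < size w then onth w n else upw u v (n - size w).
Proof.
rewrite /upw size_cat onth_cat; case: (ltnP n (size w)) => H.
  by rewrite (leq_trans H) // leq_addr.
by rewrite ltn_subLR // subnDA.
Qed.

Lemma gamma_cat w u v u1 v1 : gamma u v u1 v1 -> gamma (w ++ u) v (w ++ u1) v1.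
Proof. by move=> G n; rewrite !upw_cat G. Qed.

Lemma dlasso_reach (X : lasso_aut S) (x : st1 X) w u v :
  dlasso (d1w x w) u v = dlasso x (w ++ u) v.
Proof. by rewrite /dlasso /d1w foldl_cat. Qed.

Lemma key (X : lasso_aut S) (HX : reachable X) (c : st2 X -> Prop) (x : st1 X) u v u1 v1 :
  admissible c -> v != [::] -> v1 != [::] -> gamma u v u1 v1 ->
  (inc (dlasso x u v) c <-> inc (dlasso x u1 v1) c).
Proof.
move=> Ad nv nv1 G; have [w <-] := HX.1 x.
rewrite !dlasso_reach; apply: Ad => //; exact: gamma_cat.
Qed.

Lemma lasso_sim_wd (X : lasso_aut S) (HX : reachable X) u v u' v' u1 v1 u1' v1' :
  v != [::] -> v' != [::] -> v1 != [::] -> v1' != [::] ->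
  gamma u v u1 v1 -> gamma u' v' u1' v1' ->
  lasso_sim X u v u' v' -> lasso_sim X u1 v1 u1' v1'.
Proof.
move=> h1 h2 h3 h4 G G' L x c Ad.
have := @key _ HX c x _ _ _ _ Ad h1 h3 G; have := @key _ HX c x _ _ _ _ Ad h2 h4 G'.
have := L x c Ad; tauto.
Qed.

Lemma gamma_sym u v u1 v1 : gamma u v u1 v1 -> gamma u1 v1 u v.
Proof. by move=> G n; rewrite G. Qed.

Lemma rep_gamma (w : nat -> option S) u v u1 v1 : rep w u v -> rep w u1 v1 -> gamma u v u1 v1.
Proof. by move=> [_ H] [_ H1] n; rewrite -H -H1. Qed.

Lemma d1w_cat (X : lasso_aut S) (x : st1 X) u v : d1w x (u ++ v) = d1w (d1w x u) v.
Proof. by rewrite /d1w foldl_cat. Qed.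
Lemma d3w_cat (X : lasso_aut S) (y : st2 X) u v : d3w y (u ++ v) = d3w (d3w y u) v.
Proof. by rewrite /d3w foldl_cat. Qed.

Lemma dcirc_cat (X : lasso_aut S) (x : st1 X) u v : u != [::] ->
  dcirc x (u ++ v) = omap (fun y => d3w y v) (dcirc x u).
Proof. by case: u => //= a u _; rewrite d3w_cat. Qed.

Lemma inc_omap (A B : Type) (f : A -> B) o c : inc (omap f o) c = inc o (fun a => c (f a)).
Proof. by case: o. Qed.

Section Morph.
Variables (X Y : lasso_aut S) (f1 : st1 X -> st1 Y) (f2 : st2 X -> st2 Y).
Hypothesis M : is_morphism f1 f2.

Lemma f1_d1w x u : f1 (d1w x u) = d1w (f1 x) u.
Proof.
case: M => _ H _ _; elim: u x => //= a u IH x.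
by rewrite /d1w /= -/(d1w _ _) IH H.
Qed.
Lemma f2_d3w y u : f2 (d3w y u) = d3w (f2 y) u.
Proof.
case: M => _ _ _ H; elim: u y => //= a u IH y.
by rewrite /d3w /= -/(d3w _ _) IH H.
Qed.
Lemma f_dcirc x u : dcirc (f1 x) u = omap f2 (dcirc x u).
Proof. case: M => _ _ H _; case: u => //= a u; by rewrite f2_d3w H. Qed.
Lemma f_dlasso x u v : dlasso (f1 x) u v = omap f2 (dlasso x u v).
Proof. by rewrite /dlasso -f1_d1w f_dcirc. Qed.
End Morph.
End Aux.

Theorem mainTheorem16 (S : finType) (X : lasso_aut S) (HX : reachable X) :
  (* ~ is well defined: independent of the chosen lasso representatives *)
  (forall u v u' v' u1 v1 u1' v1' : seq S,
      v != [::] -> v' != [::] -> v1 != [::] -> v1' != [::] ->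
      gamma u v u1 v1 -> gamma u' v' u1' v1' ->
      (lasso_sim X u v u' v' <-> lasso_sim X u1 v1 u1' v1')) /\
  (* ~ is an equivalence relation on Sigma^up *)
  (forall w, is_up w -> sim X w w) /\
  (forall w w', is_up w -> is_up w' -> sim X w w' -> sim X w' w) /\
  (forall w w' w'', is_up w -> is_up w' -> is_up w'' ->
      sim X w w' -> sim X w' w'' -> sim X w w'') /\
  (* ~delta is an equivalence relation on Sigma^+ *)
  (forall u : seq S, u != [::] -> sim_delta X u u) /\
  (forall u v : seq S, u != [::] -> v != [::] ->
      sim_delta X u v -> sim_delta X v u) /\
  (forall u v w : seq S, u != [::] -> v != [::] -> w != [::] ->
      sim_delta X u v -> sim_delta X v w -> sim_delta X u w) /\
  (* compatibility with concatenation *)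
  (forall u u' v v' : seq S, u != [::] -> u' != [::] -> v != [::] -> v' != [::] ->
      sim_delta X u u' -> sim_delta X v v' -> sim_delta X (u ++ v) (u' ++ v')) /\
  (* compatibility with the mixed product *)
  (forall (u u' : seq S) w w', u != [::] -> u' != [::] -> is_up w -> is_up w' ->
      sim_delta X u u' -> sim X w w' -> sim X (mixprod u w) (mixprod u' w')) /\
  (* compatibility with the omega-power *)
  (forall u u' : seq S, u != [::] -> u' != [::] ->
      sim_delta X u u' -> sim X (omega_pow u) (omega_pow u')) /\
  (* functoriality: a morphism X -> Y gives T(X) included in T(Y) *)
  (forall (Y : lasso_aut S) (f1 : st1 X -> st1 Y) (f2 : st2 X -> st2 Y),
      reachable Y -> is_morphism f1 f2 ->
      (forall u v : seq S, u != [::] -> v != [::] ->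
          sim_delta X u v -> sim_delta Y u v) /\
      (forall w w', is_up w -> is_up w' -> sim X w w' -> sim Y w w')).
Proof.
split.
  move=> u v u' v' u1 v1 u1' v1' h1 h2 h3 h4 G G'; split.
    exact: lasso_sim_wd.
  by apply: lasso_sim_wd => //; apply: gamma_sym.
split.
  move=> w _ u v u' v' r r' x c Ad.
  exact: (key HX x Ad r.1 r'.1 (rep_gamma r r')).
split.
  move=> w w' _ _ H u v u' v' r r' x c Ad.
  have := H u' v' u v r' r x c Ad; tauto.
split.
  move=> w w' w'' _ [p [q r1]] _ H1 H2 u v u' v' r r' x c Ad.
  have := H1 _ _ _ _ r r1 x c Ad; have := H2 _ _ _ _ r1 r' x c Ad; tauto.
split.
  by move=> u _; split.
split.
  move=> u v _ _ [H1 H2]; split=> [x|y]; last by rewrite H2.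
  by have [-> ->] := H1 x.
split.
  move=> u v w _ _ _ [H1 H2] [K1 K2]; split=> [x|y]; last by rewrite H2 K2.
  by have [-> ->] := H1 x; have [-> ->] := K1 x.
split.
  move=> u u' v v' nu nu' _ _ [H1 H2] [K1 K2]; split=> [x|y].
    rewrite !d1w_cat (dcirc_cat _ _ nu) (dcirc_cat _ _ nu').
    have [-> ->] := H1 x; rewrite (K1 _).1; split => //.
    by case: (dcirc x u') => //= y; rewrite K2.
  by rewrite !d3w_cat H2 K2.
split.
  move=> u u' w w' nu nu' [r [s Rw]] [r' [s' Rw']] [D1 _] Hs p q p' q' Rp Rp'.
  have R1 : rep (mixprod u w) (u ++ r) s.
    by split; [exact: Rw.1 | move=> n; rewrite /mixprod upw_cat Rw.2].
  have R1' : rep (mixprod u' w') (u' ++ r') s'.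
    by split; [exact: Rw'.1 | move=> n; rewrite /mixprod upw_cat Rw'.2].
  apply: (lasso_sim_wd HX (u := u ++ r) (v := s) (u' := u' ++ r') (v' := s')).
  - exact: Rw.1.
  - exact: Rw'.1.
  - exact: Rp.1.
  - exact: Rp'.1.
  - exact: rep_gamma R1 Rp.
  - exact: rep_gamma R1' Rp'.
  move=> x c Ad; rewrite -!dlasso_reach (D1 x).1.
  exact: (Hs _ _ _ _ Rw Rw' _ c Ad).
split.
  move=> u u' nu nu' [D1 _] p q p' q' Rp Rp'.
  have R1 : rep (omega_pow u) [::] u by [].
  have R1' : rep (omega_pow u') [::] u' by [].
  apply: (lasso_sim_wd HX (u := [::]) (v := u) (u' := [::]) (v' := u')) => //.
  - exact: Rp.1.
  - exact: Rp'.1.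
  - exact: rep_gamma R1 Rp.
  - exact: rep_gamma R1' Rp'.
  move=> x c Ad; rewrite /dlasso /d1w /= (D1 x).2; tauto.
move=> Y f1 f2 HY M; have [Hi _ _ _] := M; split.
  move=> u v nu nv [D1 D2]; split=> y.
    have [w <-] := HY.1 y.
    rewrite -Hi -!(f1_d1w M) !(f_dcirc M).
    by have [-> ->] := D1 (d1w (init X) w).
  have [p [q [nq E]]] := HY.2 y.
  rewrite -Hi (f_dlasso M) in E.
  case E': (dlasso (init X) p q) E => [z|] //= [<-].
  by rewrite -!(f2_d3w M) D2.
move=> w w' _ _ H u v u' v' r r' y c Ad.
have [w0 <-] := HY.1 y.
rewrite -Hi -(f1_d1w M) !(f_dlasso M) !inc_omap.
apply: (H _ _ _ _ r r').
move=> p q p' q' nq nq' G; rewrite -(inc_omap f2 (dlasso _ p q)) -(inc_omap f2 (dlasso _ p' q')) -!(f_dlasso M) Hi; exact: Ad.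
Qed.
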